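(* There exist a function $\gamma:[0,\infty)\to\mathbb{R}$ and $t_0>0$ such that (i) $\gamma(t)>0$ for $t\in[0,t_0)$ and $\gamma(t)=0$ for $t\in[t_0,\infty)$; (ii) $e^{-t}-w_-(e^{-t})-\int_0^tw_-(e^{-t+s})\gamma(s)\,ds=0$ for all $t\in[0,t_0]$; (iii) $e^{-t}-w_-(e^{-t})-\int_0^tw_-(e^{-t+s})\gamma(s)\,ds<0$ for all $t\in(t_0,\infty)$.
   Context: $w_-:[0,1]\to[0,1]$ is strictly increasing, thrice differentiable, with $w_-(0)=0$, $w_-(1)=1$, $w_-'(0)>1$, $w_-'(1)>1$ and $w_-'''(p)>0$ for all $p$. *)

(* Defs.v *)
From Stdlib Require Import Reals.
From Coquelicot Require Import Coquelicot.
Open Scope R_scope.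

(* Standing assumptions on the probability weighting function w_- :
   strictly increasing self-map of [0,1], thrice differentiable on [0,1],
   w(0)=0, w(1)=1, w'(0)>1, w'(1)>1, w'''(p)>0 for all p in [0,1].
   w is given as a function R -> R; only its values on [0,1] (and the
   germs at the endpoints needed for the derivatives) matter. *)
Definition wminus_hyp (w : R -> R) : Prop :=
  (forall x y, 0 <= x -> x < y -> y <= 1 -> w x < w y) /\
  (forall x, 0 <= x <= 1 -> 0 <= w x <= 1) /\
  (forall x, 0 <= x <= 1 ->
     ex_derive w x /\ ex_derive (Derive w) x /\
     ex_derive (Derive (Derive w)) x) /\
  w 0 = 0 /\ w 1 = 1 /\
  Derive w 0 > 1 /\ Derive w 1 > 1 /\
  (forall p, 0 <= p <= 1 -> Derive (Derive (Derive w)) p > 0).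

Definition Phi (w gamma : R -> R) (t : R) : R :=
  exp (- t) - w (exp (- t)) - RInt (fun s => w (exp (- t + s)) * gamma s) 0 t.

(* Main.v *)
Require Import Defs.
From Stdlib Require Import Reals Lra Lia.
From Coquelicot Require Import Coquelicot.
Open Scope R_scope.


Lemma c_plus (f g : R -> R) x : continuous f x -> continuous g x -> continuous (fun y => f y + g y) x.
Proof. intros; now apply (continuous_plus f g). Qed.
Lemma c_minus (f g : R -> R) x : continuous f x -> continuous g x -> continuous (fun y => f y - g y) x.
Proof. intros; now apply (continuous_minus f g). Qed.
Lemma c_mult (f g : R -> R) x : continuous f x -> continuous g x -> continuous (fun y => f y * g y) x.
Proof. intros; now apply (continuous_mult f g). Qed.
Lemma c_opp (f : R -> R) x : continuous f x -> continuous (fun y => - f y) x.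
Proof. intros; now apply (continuous_opp f). Qed.
Lemma c_const (c x : R) : continuous (fun _ : R => c) x.
Proof. apply continuous_const. Qed.
Lemma c_id (x : R) : continuous (fun y : R => y) x.
Proof. apply continuous_id. Qed.
Lemma c_comp (f g : R -> R) x : continuous f x -> continuous g (f x) -> continuous (fun y => g (f y)) x.
Proof. intros; now apply (continuous_comp f g). Qed.
Lemma c_der (f : R -> R) x l : is_derive f x l -> continuous f x.
Proof. intros H. apply continuity_pt_filterlim. apply derivable_continuous_pt.
  exists l. apply is_derive_Reals; auto. Qed.
Lemma c_exder (f : R -> R) x : ex_derive f x -> continuous f x.
Proof. intros [l H]. eapply c_der; eauto. Qed.
Lemma c_exp x : continuous exp x.
Proof. apply c_exder. auto_derive. auto. Qed.

Lemma lip_cont (f : R -> R) L : 0 <= L -> (forall u v, Rabs (f u - f v) <= L * Rabs (u - v)) ->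
  forall x, continuous f x.
Proof.
  intros HL Hf x. apply continuity_pt_filterlim. apply continuity_pt_locally.
  intros eps. assert (Hd : 0 < eps / (L + 1)).
  { apply Rdiv_lt_0_compat. apply cond_pos. lra. }
  exists (mkposreal _ Hd). intros y Hy.
  change (Rabs (y - x) < eps / (L + 1)) in Hy.
  eapply Rle_lt_trans. apply Hf.
  apply Rle_lt_trans with ((L+1) * Rabs (y - x)).
  apply Rmult_le_compat_r. apply Rabs_pos. lra.
  apply Rmult_lt_reg_l with (/ (L+1)). apply Rinv_0_lt_compat; lra.
  rewrite <- Rmult_assoc, Rinv_l by lra. lra.
Qed.

Lemma Rmin_lip (c u v : R) : Rabs (Rmin u c - Rmin v c) <= Rabs (u - v).
Proof. unfold Rmin; destruct (Rle_dec u c), (Rle_dec v c); unfold Rabs;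
  repeat destruct Rcase_abs; lra. Qed.
Lemma Rmax_lip (c u v : R) : Rabs (Rmax c u - Rmax c v) <= Rabs (u - v).
Proof. unfold Rmax; destruct (Rle_dec c u), (Rle_dec c v); unfold Rabs;
  repeat destruct Rcase_abs; lra. Qed.

Definition clamp (T u : R) := Rmax 0 (Rmin u T).
Lemma clamp_lip T u v : Rabs (clamp T u - clamp T v) <= 1 * Rabs (u - v).
Proof. unfold clamp. rewrite Rmult_1_l. eapply Rle_trans. apply Rmax_lip. apply Rmin_lip. Qed.
Lemma clamp_cont T x : continuous (clamp T) x.
Proof. apply lip_cont with 1. lra. apply clamp_lip. Qed.
Lemma clamp_in T u : 0 <= T -> 0 <= clamp T u <= T.
Proof. intros; unfold clamp, Rmax, Rmin; repeat destruct Rle_dec; lra. Qed.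
Lemma clamp_id T u : 0 <= u <= T -> clamp T u = u.
Proof. intros; unfold clamp, Rmax, Rmin; repeat destruct Rle_dec; lra. Qed.

Lemma ex_RInt_cont (f : R -> R) a b : (forall x, continuous f x) -> ex_RInt f a b.
Proof. intros H; apply (ex_RInt_continuous (V := R_CompleteNormedModule)); auto. Qed.

Lemma abs_RInt_bound (f : R -> R) a b M : ex_RInt f a b ->
  (forall t, Rmin a b <= t <= Rmax a b -> Rabs (f t) <= M) ->
  Rabs (RInt f a b) <= Rabs (b - a) * M.
Proof.
  intros Hi Hb. destruct (Rle_dec a b) as [Hab|Hab].
  - rewrite (Rabs_right (b - a)) by lra. apply abs_RInt_le_const; auto.
    intros t Ht; apply Hb; rewrite Rmin_left, Rmax_right; lra.
  - assert (Hi' : ex_RInt f b a) by (apply ex_RInt_swap; auto).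
    rewrite <- (opp_RInt_swap f b a Hi'). change (Rabs (- RInt f b a) <= Rabs (b - a) * M).
    rewrite Rabs_Ropp, (Rabs_left (b - a)) by lra. replace (- (b - a)) with (a - b) by ring.
    apply abs_RInt_le_const; auto. lra.
    intros t Ht; apply Hb; rewrite Rmin_right, Rmax_left; lra.
Qed.

Lemma small_zero (x C : R) : (forall n, Rabs x <= C * (/2)^n) -> x = 0.
Proof.
  intros H. destruct (Req_dec x 0) as [|Hx]; auto. exfalso.
  assert (Hp : 0 < Rabs x) by (apply Rabs_pos_lt; auto).
  assert (HC : 0 < C). { specialize (H O). simpl in H. lra. }
  destruct (pow_lt_1_zero (/2)) with (y := Rabs x / C) as [N HN].
  rewrite Rabs_right; lra. apply Rdiv_lt_0_compat; lra.
  specialize (HN N (le_n _)). specialize (H N).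
  rewrite Rabs_right in HN. 2: { apply Rle_ge, pow_le; lra. }
  apply Rmult_lt_compat_l with (r := C) in HN; auto.
  replace (C * (Rabs x / C)) with (Rabs x) in HN by (field; lra). lra.
Qed.

Lemma rolle_d (f df : R -> R) a b : a < b ->
  (forall z, a <= z <= b -> is_derive f z (df z)) -> f a = f b ->
  exists c, a < c < b /\ df c = 0.
Proof.
  intros Hab Hd Hfab.
  set (pr := fun z (Hz : a < z < b) =>
    exist (fun l => derivable_pt_abs f z l) (df z)
      (proj1 (is_derive_Reals f z (df z)) (Hd z (conj (Rlt_le _ _ (proj1 Hz)) (Rlt_le _ _ (proj2 Hz)))))).
  destruct (Rolle f a b pr) as [c [P Hc]]; auto.
  - intros x Hx. apply continuity_pt_filterlim. eapply c_der. apply Hd; auto.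
  - exists c; split; auto.
Qed.

Lemma isd_ext (f g : R -> R) (x l : R) : (forall t, f t = g t) -> is_derive f x l -> is_derive g x l.
Proof. apply is_derive_ext. Qed.
Lemma isd_eq (f : R -> R) (x l l' : R) : l = l' -> is_derive f x l -> is_derive f x l'.
Proof. intros ->; auto. Qed.
Lemma isd_plus (f g : R -> R) (x a b : R) : is_derive f x a -> is_derive g x b -> is_derive (fun y => f y + g y) x (a + b).
Proof. rewrite !is_derive_Reals; intros; apply (derivable_pt_lim_plus f g); auto. Qed.
Lemma isd_minus (f g : R -> R) (x a b : R) : is_derive f x a -> is_derive g x b -> is_derive (fun y => f y - g y) x (a - b).
Proof. rewrite !is_derive_Reals; intros; apply (derivable_pt_lim_minus f g); auto. Qed.
Lemma isd_mult (f g : R -> R) (x a b : R) : is_derive f x a -> is_derive g x b -> is_derive (fun y => f y * g y) x (a * g x + f x * b).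
Proof. rewrite !is_derive_Reals; intros; apply (derivable_pt_lim_mult f g); auto. Qed.
Lemma isd_comp (f g : R -> R) (x a b : R) : is_derive g x b -> is_derive f (g x) a -> is_derive (fun y => f (g y)) x (a * b).
Proof. rewrite !is_derive_Reals; intros. apply (derivable_pt_lim_comp g f); auto. Qed.
Lemma isd_const (c x : R) : is_derive (fun _ => c) x 0.
Proof. auto_derive; auto. Qed.
Lemma isd_id (x : R) : is_derive (fun y => y) x 1.
Proof. auto_derive; auto. Qed.

Lemma der_poly3 (phi phi1 : R->R) (z a0 a1 a2 a3 : R): is_derive phi z (phi1 z) ->
  is_derive (fun z => phi z - a0 - a1*z - a2*z*z - a3*z*z*z) z (phi1 z - a1 - 2*a2*z - 3*a3*z*z).
Proof.
  intros H. apply isd_ext with (fun z => phi z + (- a0 - a1*z - a2*z*z - a3*z*z*z)).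
  intros; ring.
  eapply isd_eq; [| apply isd_plus; [apply H | auto_derive; auto]]. ring.
Qed.

Definition Dl (X x p0 px pX d : R) :=
  - p0 / (x*X*X) + (1/((X-x)*(X-x)) + 1/((X-x)*X) + 1/(x*X)) / X * px
  - (1/((X-x)*(X-x)) + 1/((X-x)*X)) / X * pX + d / ((X-x)*X).

Lemma D_pos (phi phi1 phi2 : R -> R) (X x : R) : 0 < x < X ->
  (forall z, 0 <= z <= X -> is_derive phi z (phi1 z)) ->
  (forall z, 0 <= z <= X -> is_derive phi1 z (phi2 z)) ->
  (forall u v, 0 <= u -> u < v -> v <= X -> phi2 u < phi2 v) ->
  0 < Dl X x (phi 0) (phi x) (phi X) (phi1 X).
Proof.
  intros Hx H1 H2 Hinc.
  set (c := Dl X x (phi 0) (phi x) (phi X) (phi1 X)).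
  set (p2 := (phi1 X * X - 2*c*(X*X*X) - phi X + phi 0)/(X*X)).
  set (p1 := phi1 X - 3*c*X*X - 2*p2*X).
  set (r := fun z => phi z - phi 0 - p1*z - p2*z*z - c*z*z*z).
  set (r1 := fun z => phi1 z - p1 - 2*p2*z - 3*c*z*z).
  set (r2 := fun z => phi2 z - 2*p2 - 6*c*z).
  assert (Dr : forall z, 0 <= z <= X -> is_derive r z (r1 z)).
  { intros z Hz. apply der_poly3. auto. }
  assert (Dr1 : forall z, 0 <= z <= X -> is_derive r1 z (r2 z)).
  { intros z Hz. unfold r1, r2.
    apply isd_ext with (fun z => phi1 z - p1 - (2*p2)*z - (3*c)*z*z - 0*z*z*z).
    intros; ring.
    eapply isd_eq. 2: apply der_poly3; auto. ring. }
  assert (r0 : r 0 = 0) by (unfold r; ring).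
  assert (rX : r X = 0).
  { unfold r, p1, p2. field. lra. }
  assert (r1X : r1 X = 0).
  { unfold r1, p1, p2. field. lra. }
  assert (rx : r x = 0).
  { unfold r, p1, p2, c, Dl. field. repeat split; lra. }
  destruct (rolle_d r r1 0 x) as [a [Ha Ha']]; try lra.
  { intros; apply Dr; lra. }
  destruct (rolle_d r r1 x X) as [b [Hb Hb']]; try lra.
  { intros; apply Dr; lra. }
  destruct (rolle_d r1 r2 a b) as [u [Hu Hu']]; try lra.
  { intros; apply Dr1; lra. }
  destruct (rolle_d r1 r2 b X) as [v [Hv Hv']]; try lra.
  { intros; apply Dr1; lra. }
  assert (Hi : phi2 u < phi2 v) by (apply Hinc; lra).
  unfold r2 in Hu', Hv'.
  assert (6 * c * (v - u) > 0) by lra.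
  destruct (Rle_dec c 0) as [Hc|Hc]; [|lra].
  assert (6 * c * (v - u) <= 0). { apply Rmult_le_0_r; lra. } lra.
Qed.

Lemma D_lin (X x : R) a0 ax aX ad b0 bx bX bd :
  Dl X x (a0 - b0) (ax - bx) (aX - bX) (ad - bd) = Dl X x a0 ax aX ad - Dl X x b0 bx bX bd.
Proof. unfold Dl, Rdiv. ring. Qed.
Lemma D_idz (X x : R) : 0 < x < X -> Dl X x 0 x X 1 = 0.
Proof. intros; unfold Dl. field. repeat split; lra. Qed.
Lemma D_H (X x hx : R) : 0 < x < X -> Dl X x 0 hx 0 0 = (1/((X-x)*(X-x)) + 1/((X-x)*X) + 1/(x*X)) / X * hx.
Proof. intros; unfold Dl. field. repeat split; lra. Qed.

Definition cA (X x : R) := - 1 / (x*X*X).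
Definition cB (X x : R) := (1/((X-x)*(X-x)) + 1/((X-x)*X) + 1/(x*X)) / X.
Definition cC (X x : R) := - ((1/((X-x)*(X-x)) + 1/((X-x)*X)) / X).
Definition cD (X x : R) := 1 / ((X-x)*X).
Lemma Dl_lin X x p0 px pX d : Dl X x p0 px pX d = cA X x * p0 + cB X x * px + cC X x * pX + cD X x * d.
Proof. unfold Dl, cA, cB, cC, cD, Rdiv. ring. Qed.


Lemma exp_le' x y : x <= y -> exp x <= exp y.
Proof. intros [H|H]. left; apply exp_increasing; auto. subst; lra. Qed.

Lemma RI_minus (f g : R -> R) a b : ex_RInt f a b -> ex_RInt g a b ->
  RInt (fun x => f x - g x) a b = RInt f a b - RInt g a b.
Proof. intros. apply (RInt_minus f g); auto. Qed.
Lemma RI_plus (f g : R -> R) a b : ex_RInt f a b -> ex_RInt g a b ->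
  RInt (fun x => f x + g x) a b = RInt f a b + RInt g a b.
Proof. intros. apply (RInt_plus f g); auto. Qed.
Lemma RI_scal (f : R -> R) a b l : ex_RInt f a b ->
  RInt (fun x => l * f x) a b = l * RInt f a b.
Proof. intros. apply (RInt_scal f); auto. Qed.
Lemma RI_chasles (f : R -> R) a b c : ex_RInt f a b -> ex_RInt f b c ->
  RInt f a b + RInt f b c = RInt f a c.
Proof. intros. apply (RInt_Chasles f); auto. Qed.
Lemma RI_ext (f g : R -> R) a b : (forall x, Rmin a b < x < Rmax a b -> f x = g x) ->
  RInt f a b = RInt g a b.
Proof. apply RInt_ext. Qed.
Lemma RI_zero (a b : R) : RInt (fun _ => 0) a b = 0.
Proof. rewrite RInt_const. apply Rmult_0_r. Qed.
Lemma RI_point (f : R -> R) a : RInt f a a = 0.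
Proof. apply (RInt_point (V := R_CompleteNormedModule)). Qed.

Lemma cont_cpt (f : R -> R) x : continuous f x -> continuity_pt f x.
Proof. intros; apply continuity_pt_filterlim; auto. Qed.

Lemma bound_on (h : R -> R) a b : a <= b -> (forall x, continuous h x) ->
  exists B, 0 <= B /\ forall s, a <= s <= b -> Rabs (h s) <= B.
Proof.
  intros Hab Hh. destruct (continuity_ab_maj (fun s => Rabs (h s)) a b Hab) as [m [Hm _]].
  { intros c _. apply cont_cpt. apply continuous_Rabs_comp. auto. }
  exists (Rabs (h m)). split. apply Rabs_pos. auto.
Qed.

Lemma Rabs3 a b c : Rabs (a - b + c) <= Rabs a + Rabs b + Rabs c.
Proof. unfold Rabs; repeat destruct Rcase_abs; lra. Qed.

Lemma unif_lim_cont (F : nat -> R -> R) (Gf : R -> R) :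
  (forall n x, continuous (F n) x) ->
  (forall eps, 0 < eps -> exists n, forall y, Rabs (F n y - Gf y) < eps) ->
  forall x, continuous Gf x.
Proof.
  intros HF Hu x. apply continuity_pt_filterlim, continuity_pt_locally. intros eps.
  assert (He : 0 < eps / 3) by (generalize (cond_pos eps); lra).
  destruct (Hu _ He) as [n Hn].
  generalize (proj1 (continuity_pt_locally (F n) x) (cont_cpt _ _ (HF n x)) (mkposreal _ He)).
  apply filter_imp. intros u Hu'. simpl in Hu'.
  generalize (Hn u) (Hn x). intros h1 h2.
  replace (Gf u - Gf x) with ((F n u - F n x) - (F n u - Gf u) + (F n x - Gf x)) by ring.
  eapply Rle_lt_trans. apply Rabs3. lra.
Qed.
Lemma IRD (f df : R -> R) a b : (forall x, Rmin a b <= x <= Rmax a b -> is_derive f x (df x)) ->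
  (forall x, Rmin a b <= x <= Rmax a b -> continuous df x) -> is_RInt df a b (f b - f a).
Proof. intros; apply (is_RInt_derive f df); auto. Qed.
Lemma bound_on' (h : R -> R) a b : a <= b -> (forall x, a <= x <= b -> continuous h x) ->
  exists B, 0 <= B /\ forall s, a <= s <= b -> Rabs (h s) <= B.
Proof.
  intros Hab Hh. destruct (continuity_ab_maj (fun s => Rabs (h s)) a b Hab) as [m [Hm _]].
  { intros c Hc. apply cont_cpt. apply continuous_Rabs_comp. auto. }
  exists (Rabs (h m)). split. apply Rabs_pos. auto.
Qed.
Lemma IRU (f : R -> R) a b l : is_RInt f a b l -> RInt f a b = l.
Proof. apply (is_RInt_unique (V := R_CompleteNormedModule)). Qed.
Lemma cont_nbhd (f : R -> R) x e : continuous f x -> 0 < e ->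
  exists d, 0 < d /\ forall y, Rabs (y - x) < d -> Rabs (f y - f x) < e.
Proof.
  intros Hc He. destruct (proj1 (continuity_pt_locally f x) (cont_cpt _ _ Hc) (mkposreal e He)) as [d Hd].
  exists d. split. apply cond_pos. intros y Hy. apply Hd. apply Hy.
Qed.
Lemma ex_RInt_on (f : R -> R) a b : (forall z, Rmin a b <= z <= Rmax a b -> continuous f z) -> ex_RInt f a b.
Proof. intros H; apply (ex_RInt_continuous (V := R_CompleteNormedModule)); auto. Qed.
Lemma RInt_lin4 (f0 f1 f2 f3 : R -> R) a b c0 c1 c2 c3 :
  ex_RInt f0 a b -> ex_RInt f1 a b -> ex_RInt f2 a b -> ex_RInt f3 a b ->
  RInt (fun s => c0 * f0 s + c1 * f1 s + c2 * f2 s + c3 * f3 s) a b =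
  c0 * RInt f0 a b + c1 * RInt f1 a b + c2 * RInt f2 a b + c3 * RInt f3 a b.
Proof.
  intros H0 H1 H2 H3.
  assert (E0 : ex_RInt (fun s => c0 * f0 s) a b) by (apply (ex_RInt_scal f0); auto).
  assert (E1 : ex_RInt (fun s => c1 * f1 s) a b) by (apply (ex_RInt_scal f1); auto).
  assert (E2 : ex_RInt (fun s => c2 * f2 s) a b) by (apply (ex_RInt_scal f2); auto).
  assert (E3 : ex_RInt (fun s => c3 * f3 s) a b) by (apply (ex_RInt_scal f3); auto).
  assert (E01 : ex_RInt (fun s => c0 * f0 s + c1 * f1 s) a b) by (apply (ex_RInt_plus (fun s => c0 * f0 s) (fun s => c1 * f1 s)); auto).
  assert (E012 : ex_RInt (fun s => c0 * f0 s + c1 * f1 s + c2 * f2 s) a b) by (apply (ex_RInt_plus (fun s => c0 * f0 s + c1 * f1 s) (fun s => c2 * f2 s)); auto).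
  rewrite (RI_plus (fun s => c0 * f0 s + c1 * f1 s + c2 * f2 s) (fun s => c3 * f3 s)) by auto.
  rewrite (RI_plus (fun s => c0 * f0 s + c1 * f1 s) (fun s => c2 * f2 s)) by auto.
  rewrite (RI_plus (fun s => c0 * f0 s) (fun s => c1 * f1 s)) by auto.
  rewrite !RI_scal by auto. reflexivity.
Qed.


Section Volterra.
Variables (kt g : R -> R) (T M L G : R).
Hypothesis HT : 0 < T.
Hypothesis HM : 0 < M.
Hypothesis HL : 0 <= L.
Hypothesis HG : 0 <= G.
Hypothesis kt_cont : forall x, continuous kt x.
Hypothesis g_cont : forall x, continuous g x.
Hypothesis kt_bd : forall u, Rabs (kt u) <= M.
Hypothesis kt_lip : forall u v, Rabs (kt u - kt v) <= L * Rabs (u - v).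
Hypothesis g_bd : forall u, Rabs (g u) <= G.

Definition conv (h : R -> R) (t : R) : R := RInt (fun s => kt (t - s) * h s) 0 t.

Lemma integrand_cont (h : R -> R) t : (forall x, continuous h x) ->
  forall s, continuous (fun s => kt (t - s) * h s) s.
Proof.
  intros Hh s. apply c_mult; auto. apply c_comp with (f := fun s => t - s).
  apply c_minus. apply c_const. apply c_id. auto.
Qed.

Lemma conv_cont (h : R -> R) : (forall x, continuous h x) -> forall t, continuous (conv h) t.
Proof.
  intros Hh t. apply continuity_pt_filterlim, continuity_pt_locally. intros eps.
  destruct (bound_on h (- Rabs t - 1) (Rabs t + 1)) as [B [HB HBb]]; auto.
  { generalize (Rabs_pos t); lra. }
  set (K := (Rabs t * L + M) * B + 1).
  assert (HK : 0 < K). { unfold K. generalize (Rabs_pos t); intros. 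
    assert (0 <= (Rabs t * L + M) * B) by (apply Rmult_le_pos; nra). lra. }
  assert (Hd : 0 < Rmin 1 (eps / K)).
  { apply Rmin_glb_lt. lra. apply Rdiv_lt_0_compat; auto. apply cond_pos. }
  exists (mkposreal _ Hd). intros t' Ht'. change (Rabs (t' - t) < Rmin 1 (eps / K)) in Ht'.
  assert (Ht1 : Rabs (t' - t) < 1) by (eapply Rlt_le_trans; [apply Ht'| apply Rmin_l]).
  assert (Ht2 : Rabs (t' - t) < eps / K) by (eapply Rlt_le_trans; [apply Ht'| apply Rmin_r]).
  unfold conv.
  set (F' := fun s => kt (t' - s) * h s).
  set (F := fun s => kt (t - s) * h s).
  assert (IF' : forall a b, ex_RInt F' a b) by (intros; apply ex_RInt_cont, integrand_cont; auto).
  assert (IF : forall a b, ex_RInt F a b) by (intros; apply ex_RInt_cont, integrand_cont; auto).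
  rewrite <- (RI_chasles F' 0 t t') by auto.
  replace (RInt F' 0 t + RInt F' t t' - RInt F 0 t) with
    (RInt (fun s => F' s - F s) 0 t + RInt F' t t') by (rewrite RI_minus by auto; ring).
  assert (Hin : forall s, Rmin 0 t <= s <= Rmax 0 t -> - Rabs t - 1 <= s <= Rabs t + 1).
  { intros s Hs. unfold Rmin, Rmax in Hs. destruct Rle_dec; unfold Rabs; destruct Rcase_abs; lra. }
  assert (Hin' : forall s, Rmin t t' <= s <= Rmax t t' -> - Rabs t - 1 <= s <= Rabs t + 1).
  { intros s Hs. unfold Rmin, Rmax in Hs. revert Ht1. destruct Rle_dec; unfold Rabs;
    repeat destruct Rcase_abs; lra. }
  assert (E1 : Rabs (RInt (fun s => F' s - F s) 0 t) <= Rabs (t - 0) * (L * Rabs (t' - t) * B)).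
  { apply abs_RInt_bound. apply ex_RInt_cont. intros; apply c_minus; apply integrand_cont; auto.
    intros s Hs. unfold F', F. rewrite <- Rmult_minus_distr_r, Rabs_mult.
    apply Rmult_le_compat; try apply Rabs_pos.
    eapply Rle_trans. apply kt_lip. right. f_equal. f_equal. ring.
    apply HBb; auto. }
  assert (E2 : Rabs (RInt F' t t') <= Rabs (t' - t) * (M * B)).
  { apply abs_RInt_bound. auto. intros s Hs. unfold F'. rewrite Rabs_mult.
    apply Rmult_le_compat; try apply Rabs_pos; auto. }
  eapply Rle_lt_trans. apply Rabs_triang.
  rewrite Rminus_0_r in E1.
  apply Rle_lt_trans with (Rabs (t' - t) * K).
  { unfold K. assert (0 <= Rabs (t' - t)) by apply Rabs_pos. nra. }
  apply Rmult_lt_reg_r with (/ K). apply Rinv_0_lt_compat; auto.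
  rewrite Rmult_assoc, Rinv_r by lra. rewrite Rmult_1_r. auto.
Qed.

Fixpoint pic (n : nat) : R -> R :=
  match n with O => g | S n => fun t => g t + conv (pic n) t end.

Lemma pic_cont n : forall x, continuous (pic n) x.
Proof.
  induction n; simpl; intros x. auto.
  apply c_plus. auto. apply conv_cont. auto.
Qed.

Definition Ac := T * M * G.
Definition Ec := exp (2 * M * T).

Lemma conv_minus (h1 h2 : R -> R) t : (forall x, continuous h1 x) -> (forall x, continuous h2 x) ->
  conv h1 t - conv h2 t = RInt (fun s => kt (t - s) * (h1 s - h2 s)) 0 t.
Proof.
  intros H1 H2. unfold conv. rewrite <- RI_minus.
  apply RI_ext. intros; ring.
  apply ex_RInt_cont, integrand_cont; auto. apply ex_RInt_cont, integrand_cont; auto.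
Qed.

Lemma pic_diff n : forall t, 0 <= t <= T ->
  Rabs (pic (S n) t - pic n t) <= Ac * (/2)^n * exp (2 * M * t).
Proof.
  induction n; intros t Ht.
  - change (pic 1 t - pic 0 t) with (g t + conv g t - g t). replace (g t + conv g t - g t) with (conv g t) by ring.
    unfold conv. eapply Rle_trans. apply abs_RInt_bound with (M := M * G).
    apply ex_RInt_cont, integrand_cont; auto.
    intros s _. rewrite Rabs_mult. apply Rmult_le_compat; try apply Rabs_pos; auto.
    rewrite Rminus_0_r, Rabs_right by lra. unfold Ac. rewrite Rmult_1_r.
    assert (1 <= exp (2 * M * t)).
    { rewrite <- exp_0. apply exp_le'. nra. }
    assert (0 <= M * G) by nra.
    assert (t * (M * G) <= T * M * G) by nra.
    assert (0 <= T * M * G) by nra. nra.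
  - change (pic (S (S n)) t - pic (S n) t) with ((g t + conv (pic (S n)) t) - (g t + conv (pic n) t)).
    replace ((g t + conv (pic (S n)) t) - (g t + conv (pic n) t)) with
      (conv (pic (S n)) t - conv (pic n) t) by ring.
    rewrite conv_minus by apply pic_cont.
    set (f := fun s => kt (t - s) * (pic (S n) s - pic n s)).
    assert (If : ex_RInt f 0 t).
    { apply ex_RInt_cont. intros; apply integrand_cont. intros; apply c_minus; apply pic_cont. }
    set (bnd := fun s => M * (Ac * (/2)^n) * exp (2 * M * s)).
    assert (Hb : is_RInt bnd 0 t ((Ac * (/2)^n) * exp (2 * M * t) / 2 - (Ac * (/2)^n) * exp (2 * M * 0) / 2)).
    { apply (IRD (fun s => (Ac * (/2)^n) * exp (2 * M * s) / 2) bnd).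
      - intros x _. unfold bnd. auto_derive. auto. field.
      - intros x _. unfold bnd. apply c_mult. apply c_const.
        apply c_comp with (f := fun s => 2 * M * s). apply c_mult. apply c_const. apply c_id.
        apply c_exp. }
    eapply Rle_trans. apply abs_RInt_le. lra. auto.
    eapply Rle_trans. apply RInt_le with (g := bnd). lra.
    apply ex_RInt_cont. intros; apply continuous_Rabs_comp. apply integrand_cont.
    intros; apply c_minus; apply pic_cont.
    eexists; apply Hb.
    intros s Hs. unfold f, bnd. rewrite Rabs_mult. rewrite Rmult_assoc. apply Rmult_le_compat; try apply Rabs_pos; auto.
    apply IHn. lra.
    rewrite (is_RInt_unique _ _ _ _ Hb). rewrite Rmult_0_r, exp_0.
    assert (0 <= Ac) by (unfold Ac; apply Rmult_le_pos; nra).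
    assert (0 < exp (2 * M * t)) by apply exp_pos.
    assert (0 <= (/2)^n) by (apply pow_le; lra).
    simpl. assert (0 <= Ac * (/2)^n) by nra. nra.
Qed.

Lemma Ac_pos : 0 <= Ac.
Proof. unfold Ac. apply Rmult_le_pos; nra. Qed.

Lemma pic_diff' n t : 0 <= t <= T -> Rabs (pic (S n) t - pic n t) <= Ac * Ec * (/2)^n.
Proof.
  intros Ht. eapply Rle_trans. apply pic_diff; auto.
  assert (exp (2 * M * t) <= Ec) by (unfold Ec; apply exp_le'; nra).
  assert (0 <= Ac * (/2)^n) by (apply Rmult_le_pos; [apply Ac_pos | apply pow_le; lra]).
  replace (Ac * Ec * (/2)^n) with (Ac * (/2)^n * Ec) by ring.
  apply Rmult_le_compat_l; auto.
Qed.

Lemma pic_tele n m t : 0 <= t <= T ->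
  Rabs (pic (n + m) t - pic n t) <= 2 * Ac * Ec * ((/2)^n - (/2)^(n+m)).
Proof.
  intros Ht. induction m.
  - rewrite Nat.add_0_r. replace (pic n t - pic n t) with 0 by ring. rewrite Rabs_R0. right; ring.
  - replace (pic (n + S m) t - pic n t) with ((pic (S (n + m)) t - pic (n+m) t) + (pic (n + m) t - pic n t)).
    2: { rewrite Nat.add_succ_r. ring. }
    eapply Rle_trans. apply Rabs_triang.
    eapply Rle_trans. apply Rplus_le_compat. apply pic_diff'; auto. apply IHm.
    rewrite Nat.add_succ_r. change ((/2)^(S (n+m))) with (/2 * (/2)^(n+m)). right; field.
Qed.

Lemma pic_tele' n m t : 0 <= t <= T -> (n <= m)%nat ->
  Rabs (pic m t - pic n t) <= 2 * Ac * Ec * (/2)^n.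
Proof.
  intros Ht Hnm. replace m with (n + (m - n))%nat by lia.
  eapply Rle_trans. apply pic_tele; auto.
  assert (0 <= (/2)^(n + (m-n))) by (apply pow_le; lra).
  assert (0 <= Ac * Ec) by (apply Rmult_le_pos; [apply Ac_pos | unfold Ec; left; apply exp_pos]).
  nra.
Qed.

Lemma pic_tele2 n m t : 0 <= t <= T ->
  Rabs (pic m t - pic n t) <= 2 * Ac * Ec * ((/2)^n + (/2)^m).
Proof.
  intros Ht.
  assert (0 <= (/2)^n) by (apply pow_le; lra).
  assert (0 <= (/2)^m) by (apply pow_le; lra).
  assert (0 <= Ac * Ec) by (apply Rmult_le_pos; [apply Ac_pos | unfold Ec; left; apply exp_pos]).
  destruct (Nat.le_ge_cases n m) as [Hc|Hc].
  - eapply Rle_trans. apply pic_tele'; auto. nra.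
  - rewrite Rabs_minus_sym. eapply Rle_trans. apply pic_tele'; auto. nra.
Qed.

Lemma pic_cv y : ex_finite_lim_seq (fun n => pic n (clamp T y)).
Proof.
  apply ex_lim_seq_cauchy_corr. intros eps.
  assert (HT' : 0 <= clamp T y <= T) by (apply clamp_in; lra).
  assert (HA : 0 <= Ac * Ec) by (apply Rmult_le_pos; [apply Ac_pos | unfold Ec; left; apply exp_pos]).
  destruct (pow_lt_1_zero (/2)) with (y := eps / (4 * Ac * Ec + 1)) as [N HN].
  rewrite Rabs_right; lra. apply Rdiv_lt_0_compat. apply cond_pos. lra.
  exists N. intros n m Hn Hm.
  replace (pic n (clamp T y) - pic m (clamp T y)) with
    ((pic n (clamp T y) - pic N (clamp T y)) - (pic m (clamp T y) - pic N (clamp T y))) by ring.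
  eapply Rle_lt_trans. apply Rabs_triang. rewrite Rabs_Ropp.
  eapply Rle_lt_trans. apply Rplus_le_compat; apply pic_tele'; eauto.
  specialize (HN N (le_n _)). rewrite Rabs_right in HN by (apply Rle_ge, pow_le; lra).
  apply Rmult_lt_compat_l with (r := 4 * Ac * Ec + 1) in HN; [|lra].
  replace ((4 * Ac * Ec + 1) * (eps / (4 * Ac * Ec + 1))) with (pos eps) in HN by (field; lra).
  assert (0 <= (/2)^N) by (apply pow_le; lra). nra.
Qed.

Definition Gam (y : R) : R := real (Lim_seq (fun n => pic n (clamp T y))).

Lemma Gam_lim y : is_lim_seq (fun n => pic n (clamp T y)) (Gam y).
Proof.
  destruct (pic_cv y) as [l Hl]. unfold Gam. rewrite (is_lim_seq_unique _ _ Hl). simpl. auto.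
Qed.

Lemma Gam_approx n y : Rabs (pic n (clamp T y) - Gam y) <= 2 * Ac * Ec * (/2)^n.
Proof.
  assert (HT' : 0 <= clamp T y <= T) by (apply clamp_in; lra).
  assert (H1 : is_lim_seq (fun m => Rabs (pic m (clamp T y) - pic n (clamp T y)))
     (Rabs (Gam y - pic n (clamp T y)))).
  { apply (is_lim_seq_abs _ (Finite (Gam y - pic n (clamp T y)))).
    apply is_lim_seq_minus'. apply Gam_lim. apply is_lim_seq_const. }
  assert (H2 : is_lim_seq (fun m => 2 * Ac * Ec * ((/2)^n + (/2)^m)) (2 * Ac * Ec * ((/2)^n + 0))).
  { apply (is_lim_seq_scal_l _ _ (Finite ((/2)^n + 0))). apply is_lim_seq_plus'.
    apply is_lim_seq_const. apply is_lim_seq_geom. rewrite Rabs_right; lra. }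
  generalize (is_lim_seq_le _ _ _ _ (fun m => pic_tele2 n m _ HT') H1 H2). simpl.
  rewrite Rabs_minus_sym, Rplus_0_r. auto.
Qed.

Lemma Gam_cont : forall x, continuous Gam x.
Proof.
  apply unif_lim_cont with (F := fun n y => pic n (clamp T y)).
  - intros n x. apply c_comp with (f := clamp T). apply clamp_cont. apply pic_cont.
  - intros eps Heps.
    assert (HA : 0 <= Ac * Ec) by (apply Rmult_le_pos; [apply Ac_pos | unfold Ec; left; apply exp_pos]).
    destruct (pow_lt_1_zero (/2)) with (y := eps / (2 * Ac * Ec + 1)) as [N HN].
    rewrite Rabs_right; lra. apply Rdiv_lt_0_compat; lra.
    exists N. intros y. eapply Rle_lt_trans. apply Gam_approx.
    specialize (HN N (le_n _)). rewrite Rabs_right in HN by (apply Rle_ge, pow_le; lra).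
    apply Rmult_lt_compat_l with (r := 2 * Ac * Ec + 1) in HN; [|lra].
    replace ((2 * Ac * Ec + 1) * (eps / (2 * Ac * Ec + 1))) with eps in HN by (field; lra).
    assert (0 <= (/2)^N) by (apply pow_le; lra). nra.
Qed.

Lemma Gam_eq t : 0 <= t <= T -> Gam t = g t + conv Gam t.
Proof.
  intros Ht. apply Rminus_diag_uniq.
  apply small_zero with (C := 2 * Ac * Ec + T * M * (2 * Ac * Ec * 2)).
  intros n.
  assert (E1 := Gam_approx (S n) t). rewrite clamp_id in E1 by auto.
  change (pic (S n) t) with (g t + conv (pic n) t) in E1.
  assert (E2 : Rabs (conv (pic n) t - conv Gam t) <= T * M * (2 * Ac * Ec * 2) * (/2)^(S n)).
  { rewrite conv_minus by (apply pic_cont || apply Gam_cont).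
    eapply Rle_trans. apply abs_RInt_bound with (M := M * (2 * Ac * Ec * (/2)^n)).
    apply ex_RInt_cont, integrand_cont. intros; apply c_minus. apply pic_cont. apply Gam_cont.
    intros s Hs. rewrite Rmin_left, Rmax_right in Hs by lra.
    rewrite Rabs_mult. apply Rmult_le_compat; try apply Rabs_pos; auto.
    generalize (Gam_approx n s). rewrite clamp_id by lra. auto.
    rewrite Rminus_0_r, Rabs_right by lra. simpl.
    assert (HA : 0 <= Ac * Ec) by (apply Rmult_le_pos; [apply Ac_pos | unfold Ec; left; apply exp_pos]).
    assert (0 <= (/2)^n) by (apply pow_le; lra).
    assert (0 <= M * (2 * Ac * Ec * (/2)^n)) by (apply Rmult_le_pos; [lra|]; rewrite (Rmult_assoc 2 Ac Ec); apply Rmult_le_pos; [apply Rmult_le_pos|]; lra).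
    assert (t * (M * (2 * Ac * Ec * (/2)^n)) <= T * (M * (2 * Ac * Ec * (/2)^n))) by nra.
    nra. }
  replace (Gam t - (g t + conv Gam t)) with
    (- (g t + conv (pic n) t - Gam t) + (conv (pic n) t - conv Gam t)) by ring.
  eapply Rle_trans. apply Rabs_triang. rewrite Rabs_Ropp.
  eapply Rle_trans. apply Rplus_le_compat. apply E1. apply E2.
  assert (0 <= (/2)^n) by (apply pow_le; lra).
  assert (HA : 0 <= Ac * Ec) by (apply Rmult_le_pos; [apply Ac_pos | unfold Ec; left; apply exp_pos]).
  assert ((/2)^(S n) <= (/2)^n) by (simpl; nra).
  assert (0 <= T * M * (2 * Ac * Ec * 2)) by (apply Rmult_le_pos; nra).
  nra.
Qed.
End Volterra.


Section W.
Variable w : R -> R.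
Hypothesis hw : wminus_hyp w.

Lemma w_rng x : 0 <= x <= 1 -> 0 <= w x <= 1.
Proof. destruct hw as [_ [H _]]. auto. Qed.
Lemma w_d1 x : 0 <= x <= 1 -> ex_derive w x.
Proof. destruct hw as [_ [_ [H _]]]. intros; apply H; auto. Qed.
Lemma w_d2 x : 0 <= x <= 1 -> ex_derive (Derive w) x.
Proof. destruct hw as [_ [_ [H _]]]. intros; apply H; auto. Qed.
Lemma w_d3 x : 0 <= x <= 1 -> ex_derive (Derive (Derive w)) x.
Proof. destruct hw as [_ [_ [H _]]]. intros; apply H; auto. Qed.
Lemma w_0 : w 0 = 0.
Proof. destruct hw as [_ [_ [_ [H _]]]]. auto. Qed.
Lemma w_1 : w 1 = 1.
Proof. destruct hw as [_ [_ [_ [_ [H _]]]]]. auto. Qed.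
Lemma wp_0 : Derive w 0 > 1.
Proof. destruct hw as [_ [_ [_ [_ [_ [H _]]]]]]. auto. Qed.
Lemma wp_1 : Derive w 1 > 1.
Proof. destruct hw as [_ [_ [_ [_ [_ [_ [H _]]]]]]]. auto. Qed.
Lemma w3_pos p : 0 <= p <= 1 -> Derive (Derive (Derive w)) p > 0.
Proof. destruct hw as [_ [_ [_ [_ [_ [_ [_ H]]]]]]]. auto. Qed.

Lemma w_der x : 0 <= x <= 1 -> is_derive w x (Derive w x).
Proof. intros; apply Derive_correct, w_d1; auto. Qed.
Lemma w1_der x : 0 <= x <= 1 -> is_derive (Derive w) x (Derive (Derive w) x).
Proof. intros; apply Derive_correct, w_d2; auto. Qed.
Lemma w2_der x : 0 <= x <= 1 -> is_derive (Derive (Derive w)) x (Derive (Derive (Derive w)) x).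
Proof. intros; apply Derive_correct, w_d3; auto. Qed.
Lemma w_c x : 0 <= x <= 1 -> continuous w x.
Proof. intros; apply c_exder, w_d1; auto. Qed.
Lemma w1_c x : 0 <= x <= 1 -> continuous (Derive w) x.
Proof. intros; apply c_exder, w_d2; auto. Qed.
Lemma w2_c x : 0 <= x <= 1 -> continuous (Derive (Derive w)) x.
Proof. intros; apply c_exder, w_d3; auto. Qed.

Lemma w2_inc u v : 0 <= u -> u < v -> v <= 1 -> Derive (Derive w) u < Derive (Derive w) v.
Proof.
  intros Hu Huv Hv.
  destruct (MVT_gen (Derive (Derive w)) u v (Derive (Derive (Derive w)))) as [c [Hc Hm]].
  - intros x Hx. rewrite Rmin_left, Rmax_right in Hx by lra. apply w2_der; lra.
  - intros x Hx. rewrite Rmin_left, Rmax_right in Hx by lra. apply cont_cpt, w2_c; lra.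
  - rewrite Rmin_left, Rmax_right in Hc by lra.
    assert (Derive (Derive (Derive w)) c > 0) by (apply w3_pos; lra).
    assert (0 < Derive (Derive (Derive w)) c * (v - u)) by (apply Rmult_lt_0_compat; lra).
    lra.
Qed.

Lemma exists_T : exists T, 0 < T /\ exp (- T) - w (exp (- T)) < 0.
Proof.
  assert (Hd := proj1 (is_derive_Reals _ _ _) (w_der 0 ltac:(lra))).
  destruct (Hd (Derive w 0 - 1)) as [delta Hdel]. generalize wp_0; lra.
  set (h := Rmin (delta / 2) (1/2)).
  assert (Hh0 : 0 < h). { unfold h. apply Rmin_glb_lt. generalize (cond_pos delta); lra. lra. }
  assert (Hh1 : h < 1). { unfold h. generalize (Rmin_r (delta/2) (1/2)); lra. }
  assert (Hhd : h < delta). { unfold h. generalize (Rmin_l (delta/2) (1/2)) (cond_pos delta); lra. }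
  specialize (Hdel h ltac:(lra)). rewrite Rabs_right in Hdel by lra.
  specialize (Hdel Hhd). rewrite Rplus_0_l, w_0, Rminus_0_r in Hdel.
  exists (- ln h). split.
  - assert (ln h < ln 1) by (apply ln_increasing; lra). rewrite ln_1 in H. lra.
  - rewrite Ropp_involutive, exp_ln by lra.
    apply Rabs_lt_between in Hdel. destruct Hdel as [Hdel _].
    assert (1 < w h / h) by lra.
    apply Rmult_lt_compat_r with (r := h) in H; auto.
    unfold Rdiv in H. rewrite Rmult_assoc, Rinv_l in H by lra. lra.
Qed.

Variable T : R.
Hypothesis HT : 0 < T.

Definition kk (u : R) := Derive w (exp (- u)) * exp (- u).
Definition kd (u : R) := Derive (Derive w) (exp (- u)) * (- exp (- u)) * exp (- u)
   + Derive w (exp (- u)) * (- exp (- u)).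
Definition g0 (t : R) := - exp (- t) + Derive w (exp (- t)) * exp (- t).
Definition f0 (t : R) := exp (- t) - w (exp (- t)).
Definition Kw (u : R) := w (exp (- u)).
Definition kt (u : R) := kk (clamp T u).
Definition gtt (u : R) := g0 (clamp T u).

Lemma expm_rng u : 0 <= u -> 0 <= exp (- u) <= 1.
Proof.
  intros Hu. split. left; apply exp_pos. rewrite <- exp_0. apply exp_le'. lra.
Qed.
Lemma expm_der (u : R) : is_derive (fun u => exp (- u)) u (- exp (- u)).
Proof. auto_derive; auto. ring. Qed.
Lemma expm_c u : continuous (fun u => exp (- u)) u.
Proof. eapply c_der. apply expm_der. Qed.

Lemma kk_der u : 0 <= u -> is_derive kk u (kd u).
Proof.
  intros Hu. unfold kk, kd. eapply isd_eq. 2: apply isd_mult.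
  2: apply isd_comp. 2: apply expm_der. 2: apply w1_der, expm_rng; auto.
  2: apply expm_der. cbv beta. ring.
Qed.
Lemma kk_c u : 0 <= u -> continuous kk u.
Proof. intros; eapply c_der; apply kk_der; auto. Qed.
Lemma kd_c u : 0 <= u -> continuous kd u.
Proof.
  intros Hu. unfold kd. apply c_plus; apply c_mult; try apply c_mult; try apply c_opp; try apply expm_c.
  apply c_comp with (f := fun u => exp (- u)). apply expm_c. apply w2_c, expm_rng; auto.
  apply c_comp with (f := fun u => exp (- u)). apply expm_c. apply w1_c, expm_rng; auto.
Qed.
Lemma g0_c u : 0 <= u -> continuous g0 u.
Proof.
  intros Hu. unfold g0. apply c_plus. apply c_opp, expm_c. apply c_mult; try apply expm_c.
  apply c_comp with (f := fun u => exp (- u)). apply expm_c. apply w1_c, expm_rng; auto.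
Qed.
Lemma f0_der t : 0 <= t -> is_derive f0 t (g0 t).
Proof.
  intros Ht. unfold f0, g0. eapply isd_eq. 2: apply isd_minus. 2: apply expm_der.
  2: apply isd_comp. 2: apply expm_der. 2: apply w_der, expm_rng; auto. ring.
Qed.
Lemma Kw_der u : 0 <= u -> is_derive Kw u (- kk u).
Proof.
  intros Hu. unfold Kw, kk. eapply isd_eq. 2: apply isd_comp. 2: apply expm_der.
  2: apply w_der, expm_rng; auto. ring.
Qed.

Lemma kt_c x : continuous kt x.
Proof. unfold kt. apply c_comp with (f := clamp T). apply clamp_cont. apply kk_c, clamp_in; lra. Qed.
Lemma gt_c x : continuous gtt x.
Proof. unfold gtt. apply c_comp with (f := clamp T). apply clamp_cont. apply g0_c, clamp_in; lra. Qed.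

Lemma clamp_idem u : clamp T (clamp T u) = clamp T u.
Proof. apply clamp_id, clamp_in; lra. Qed.

Lemma kt_bound : exists M, 0 < M /\ forall u, Rabs (kt u) <= M.
Proof.
  destruct (bound_on kt 0 T) as [B [HB HBb]]. lra. apply kt_c.
  exists (B + 1). split. lra. intros u.
  assert (kt u = kt (clamp T u)) by (unfold kt; rewrite clamp_idem; auto).
  rewrite H. generalize (HBb (clamp T u) (clamp_in T u ltac:(lra))). lra.
Qed.
Lemma gt_bound : exists G, 0 <= G /\ forall u, Rabs (gtt u) <= G.
Proof.
  destruct (bound_on gtt 0 T) as [B [HB HBb]]. lra. apply gt_c.
  exists B. split. lra. intros u.
  assert (gtt u = gtt (clamp T u)) by (unfold gtt; rewrite clamp_idem; auto).
  rewrite H. apply HBb. apply clamp_in; lra.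
Qed.
Lemma kt_lip : exists L, 0 <= L /\ forall u v, Rabs (kt u - kt v) <= L * Rabs (u - v).
Proof.
  destruct (bound_on' kd 0 T) as [B [HB HBb]]. lra. intros; apply kd_c; lra.
  exists B. split; auto.
  assert (Hk : forall u v, 0 <= u <= T -> 0 <= v <= T -> Rabs (kk u - kk v) <= B * Rabs (u - v)).
  { intros u v Hu Hv.
    destruct (MVT_gen kk v u kd) as [c [Hc Hm]].
    - intros x Hx. apply kk_der. unfold Rmin, Rmax in Hx; destruct Rle_dec in Hx; lra.
    - intros x Hx. apply cont_cpt, kk_c. unfold Rmin, Rmax in Hx; destruct Rle_dec in Hx; lra.
    - rewrite Hm, Rabs_mult. apply Rmult_le_compat_r. apply Rabs_pos. apply HBb.
      unfold Rmin, Rmax in Hc; destruct Rle_dec in Hc; lra. }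
  intros u v. unfold kt. eapply Rle_trans. apply Hk; apply clamp_in; lra.
  apply Rmult_le_compat_l; auto. generalize (clamp_lip T u v). lra.
Qed.

Definition GW := Gam kt gtt T.
Lemma GW_cont x : continuous GW x.
Proof.
  destruct kt_bound as [M [HM HMb]]. destruct gt_bound as [G [HG HGb]].
  destruct kt_lip as [L [HL HLb]].
  eapply (Gam_cont kt gtt T M L G); eauto. apply kt_c. apply gt_c.
Qed.
Lemma GW_eq t : 0 <= t <= T -> GW t = g0 t + conv kt GW t.
Proof.
  intros Ht.
  destruct kt_bound as [M [HM HMb]]. destruct gt_bound as [G [HG HGb]].
  destruct kt_lip as [L [HL HLb]].
  unfold GW. rewrite (Gam_eq kt gtt T M L G); eauto. unfold gtt. rewrite clamp_id; auto.
  apply kt_c. apply gt_c.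
Qed.

Definition Kt (u : R) := 1 - RInt kt 0 u.
Lemma Kt_der u : is_derive Kt u (- kt u).
Proof.
  unfold Kt. eapply isd_eq. 2: apply isd_minus. 2: apply isd_const.
  2: apply (is_derive_RInt kt (fun b => RInt kt 0 b) 0).
  ring.
  apply filter_forall. intros b. apply (RInt_correct (V := R_CompleteNormedModule)). apply ex_RInt_cont, kt_c.
  apply kt_c.
Qed.
Lemma Kt_c u : continuous Kt u.
Proof. eapply c_der. apply Kt_der. Qed.
Lemma Kt_eq u : 0 <= u <= T -> Kt u = Kw u.
Proof.
  intros Hu.
  assert (H : is_RInt (fun z => - kt z) 0 u (Kw u - Kw 0)).
  { apply IRD. intros z Hz. rewrite Rmin_left, Rmax_right in Hz by lra.
    unfold kt. rewrite clamp_id by lra. apply Kw_der; lra.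
    intros; apply c_opp, kt_c. }
  apply (is_RInt_unique (V := R_CompleteNormedModule)) in H.
  assert (H' : RInt (fun z => -1 * kt z) 0 u = -1 * RInt kt 0 u).
  { apply RI_scal. apply ex_RInt_cont, kt_c. }
  unfold Kt. unfold Kw in H at 2. rewrite Ropp_0, exp_0, w_1 in H.
  rewrite <- (RI_ext (fun z => - kt z)) in H'. lra.
  intros; ring.
Qed.

Definition FF (t : R) : R := RInt (fun s => Kt (t - s) * GW s) 0 t.

Lemma c2d_all (P : R -> R -> Prop) x y : (forall u v, P u v) -> locally_2d P x y.
Proof. intros H. exists (mkposreal 1 Rlt_0_1). intros; auto. Qed.

Lemma FF_der t : is_derive FF t (GW t - conv kt GW t).
Proof.
  set (f := fun t s => Kt (t - s) * GW s).
  assert (fc : forall t s, continuous (fun s => f t s) s).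
  { intros t' s. unfold f. apply c_mult. apply c_comp with (f := fun s => t' - s).
    apply c_minus. apply c_const. apply c_id. apply Kt_c. apply GW_cont. }
  assert (fd : forall t s, is_derive (fun u => f u s) t (- kt (t - s) * GW s)).
  { intros t' s. unfold f. eapply isd_eq. 2: apply isd_mult. 2: apply isd_comp.
    2: apply isd_minus. 2: apply isd_id. 2: apply isd_const. 2: apply Kt_der. 2: apply isd_const.
    cbv beta. ring. }
  assert (fD : forall t s, Derive (fun u => f u s) t = - kt (t - s) * GW s).
  { intros; apply is_derive_unique; auto. }
  assert (c2 : forall u v, continuity_2d_pt (fun u v => Derive (fun z => f z v) u) u v).
  { intros u v. apply continuity_2d_pt_ext with (fun u v => - kt (u - v) * GW v).
    intros; rewrite fD; auto.
    apply continuity_2d_pt_mult. apply continuity_2d_pt_opp.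
    apply continuity_1d_2d_pt_comp. apply cont_cpt, kt_c.
    apply continuity_2d_pt_minus. apply continuity_2d_pt_id1. apply continuity_2d_pt_id2.
    apply continuity_1d_2d_pt_comp. apply cont_cpt, GW_cont. apply continuity_2d_pt_id2. }
  assert (H := is_derive_RInt_param_bound_comp f (fun _ => 0) (fun t => t) t 0 1).
  unfold FF. eapply isd_eq. 2: apply H.
    rewrite Rmult_0_r, Rmult_1_r, Rplus_0_r.
    unfold conv. rewrite (RI_ext _ (fun s => -1 * (kt (t - s) * GW s))).
    rewrite RI_scal. unfold f. replace (t - t) with 0 by ring.
    unfold Kt. rewrite RI_point. ring.
    apply ex_RInt_cont. intros; apply c_mult. apply c_comp with (f := fun s => t - s).
    apply c_minus. apply c_const. apply c_id. apply kt_c. apply GW_cont.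
    intros; rewrite fD; ring.
  - apply filter_forall. intros; apply ex_RInt_cont; auto.
  - exists (mkposreal 1 Rlt_0_1). apply filter_forall. intros; apply ex_RInt_cont; auto.
  - exists (mkposreal 1 Rlt_0_1). apply filter_forall. intros; apply ex_RInt_cont; auto.
  - apply isd_const.
  - apply isd_id.
  - exists (mkposreal 1 Rlt_0_1). apply filter_forall. intros; eexists; apply fd.
  - intros; apply c2.
  - apply c2d_all. intros; apply c2.
  - apply c2d_all. intros; apply c2.
  - apply cont_cpt; auto.
  - apply cont_cpt; auto.
Qed.

Lemma FF_eq t : 0 <= t <= T -> FF t = f0 t.
Proof.
  intros Ht.
  set (E := fun t => FF t - f0 t).
  set (dE := fun t => GW t - conv kt GW t - g0 t).
  assert (HE : forall x, 0 <= x <= T -> is_derive E x (dE x)).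
  { intros x Hx. apply isd_minus. apply FF_der. apply f0_der; lra. }
  assert (HdE : forall x, 0 <= x <= T -> dE x = 0).
  { intros x Hx. unfold dE. rewrite GW_eq by auto. ring. }
  destruct (Req_dec t 0) as [->|Ht0].
  - unfold FF, f0. rewrite RI_point. rewrite Ropp_0, exp_0, w_1. ring.
  - destruct (MVT_gen E 0 t dE) as [c [Hc Hm]].
    + intros x Hx. rewrite Rmin_left, Rmax_right in Hx by lra. apply HE; lra.
    + intros x Hx. rewrite Rmin_left, Rmax_right in Hx by lra. apply cont_cpt. eapply c_der. apply HE; lra.
    + rewrite Rmin_left, Rmax_right in Hc by lra. rewrite HdE in Hm by lra.
      unfold E in Hm. unfold FF at 2 in Hm. unfold f0 at 2 in Hm. rewrite RI_point in Hm.
      rewrite Ropp_0, exp_0, w_1 in Hm. lra.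
Qed.

Lemma wexp_c t s : s <= t -> continuous (fun s => w (exp (- t + s))) s.
Proof.
  intros Hs. apply c_comp with (f := fun s => exp (- t + s)).
  apply c_comp with (f := fun s => - t + s). apply c_plus. apply c_const. apply c_id. apply c_exp.
  apply w_c. replace (- t + s) with (- (t - s)) by ring. apply expm_rng. lra.
Qed.

Lemma Phi_GW t : 0 <= t <= T -> RInt (fun s => w (exp (- t + s)) * GW s) 0 t = f0 t.
Proof.
  intros Ht. rewrite <- FF_eq by auto. unfold FF. apply RI_ext.
  intros s Hs. rewrite Rmin_left, Rmax_right in Hs by lra.
  rewrite Kt_eq by lra. unfold Kw. do 3 f_equal. ring.
Qed.

Lemma GW_0 : GW 0 > 0.
Proof.
  rewrite GW_eq by lra. unfold conv. rewrite RI_point. unfold g0.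
  rewrite Ropp_0, exp_0. generalize wp_1. lra.
Qed.

Hypothesis HfT : exp (- T) - w (exp (- T)) < 0.

Lemma GW_zero : exists t, 0 <= t <= T /\ GW t <= 0.
Proof.
  destruct (Classical_Prop.classic (exists t, 0 <= t <= T /\ GW t <= 0)) as [H|H]; auto.
  exfalso.
  assert (Hp : forall t, 0 <= t <= T -> GW t > 0).
  { intros t Ht. destruct (Rlt_le_dec 0 (GW t)); auto. exfalso; apply H; exists t; auto. }
  assert (0 <= RInt (fun s => w (exp (- T + s)) * GW s) 0 T).
  { apply RInt_ge_0. lra.
    apply ex_RInt_on. intros z Hz. rewrite Rmin_left, Rmax_right in Hz by lra.
    apply c_mult. apply wexp_c; lra. apply GW_cont.
    intros x Hx. apply Rmult_le_pos. apply w_rng.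
    replace (- T + x) with (- (T - x)) by ring. apply expm_rng; lra.
    left; apply Hp; lra. }
  rewrite Phi_GW in H0 by lra. unfold f0 in H0. lra.
Qed.

Lemma first_zero : exists t0, 0 < t0 <= T /\ GW t0 = 0 /\ forall s, 0 <= s < t0 -> GW s > 0.
Proof.
  set (S := fun t => 0 <= t <= T /\ forall s, 0 <= s <= t -> GW s > 0).
  destruct (completeness S) as [t0 [Hub Hlub]].
  { exists T. intros t [Ht _]. lra. }
  { exists 0. split. lra. intros s Hs. replace s with 0 by lra. apply GW_0. }
  assert (Hb : forall s, 0 <= s < t0 -> GW s > 0).
  { intros s Hs. destruct (Classical_Prop.classic (exists t, S t /\ s < t)) as [[t [[_ Ht] Hst]]|Hn].
    apply Ht; lra.
    exfalso. assert (t0 <= s). { apply Hlub. intros t Ht. destruct (Rle_dec t s); auto.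
      exfalso; apply Hn; exists t; split; auto; lra. } lra. }
  assert (HT0 : t0 <= T). { apply Hlub. intros t [Ht _]. lra. }
  assert (Hpos : 0 < t0).
  { destruct (cont_nbhd GW 0 (GW 0) (GW_cont 0) GW_0) as [d [Hd Hdd]].
    assert (S (Rmin (d/2) T)).
    { split. split. apply Rmin_glb; lra. apply Rmin_r.
      intros s Hs. assert (Rmin (d/2) T <= d/2) by apply Rmin_l.
      specialize (Hdd s). rewrite Rminus_0_r, Rabs_right in Hdd by lra.
      assert (Rabs (GW s - GW 0) < GW 0) by (apply Hdd; lra).
      apply Rabs_lt_between in H0. lra. }
    apply Hub in H. assert (0 < Rmin (d/2) T) by (apply Rmin_glb_lt; lra). lra. }
  exists t0. split. lra. split; auto.
  destruct (Rtotal_order (GW t0) 0) as [Hn|[Hz|Hp]]; auto.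
  - exfalso. destruct (cont_nbhd GW t0 (- GW t0) (GW_cont t0)) as [d [Hd Hdd]]. lra.
    set (s := Rmax (t0 - d/2) 0).
    assert (Hs : 0 <= s < t0 /\ Rabs (s - t0) < d).
    { unfold s, Rmax. destruct Rle_dec; split; try lra; rewrite Rabs_left; lra. }
    assert (Rabs (GW s - GW t0) < - GW t0) by (apply Hdd; tauto).
    apply Rabs_lt_between in H. assert (GW s > 0) by (apply Hb; tauto). lra.
  - exfalso. destruct (cont_nbhd GW t0 (GW t0) (GW_cont t0)) as [d [Hd Hdd]]. lra.
    assert (Hall : forall s, 0 <= s < t0 + d -> GW s > 0).
    { intros s Hs. destruct (Rlt_le_dec s t0). apply Hb; lra.
      assert (Rabs (GW s - GW t0) < GW t0). { apply Hdd. rewrite Rabs_right; lra. }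
      apply Rabs_lt_between in H. lra. }
    destruct (Rlt_le_dec t0 T).
    + assert (S (Rmin (t0 + d/2) T)).
      { split. split. apply Rmin_glb; lra. apply Rmin_r.
        intros s Hs. assert (Rmin (t0 + d/2) T <= t0 + d/2) by apply Rmin_l. apply Hall; lra. }
      apply Hub in H. assert (t0 < Rmin (t0 + d/2) T) by (apply Rmin_glb_lt; lra). lra.
    + destruct GW_zero as [t [Ht Ht']]. assert (GW t > 0) by (apply Hall; lra). lra.
Qed.

Lemma Rmin_c (c x : R) : continuous (fun s => Rmin s c) x.
Proof. apply lip_cont with 1. lra. intros; rewrite Rmult_1_l; apply Rmin_lip. Qed.

Lemma phi_der (s z : R) : 0 <= z * exp s <= 1 ->
  is_derive (fun z => w (z * exp s)) z (Derive w (z * exp s) * exp s).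
Proof.
  intros Hz. apply isd_comp with (f := w) (g := fun z => z * exp s).
  eapply isd_eq. 2: apply isd_mult. 2: apply isd_id. 2: apply isd_const. cbv beta. ring.
  apply w_der; auto.
Qed.
Lemma phi1_der (s z : R) : 0 <= z * exp s <= 1 ->
  is_derive (fun z => Derive w (z * exp s) * exp s) z (Derive (Derive w) (z * exp s) * exp s * exp s).
Proof.
  intros Hz.
  assert (H1 : is_derive (fun z => z * exp s) z (exp s)).
  { eapply isd_eq; [|apply isd_mult; [apply isd_id|apply isd_const]]. cbv beta; ring. }
  assert (H2 := isd_comp (Derive w) (fun z => z * exp s) z _ _ H1 (w1_der _ Hz)).
  eapply isd_eq. 2: apply (isd_mult _ (fun _ => exp s) z _ _ H2 (isd_const _ z)). cbv beta; ring.
Qed.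

Lemma tail t0 : 0 < t0 <= T -> GW t0 = 0 -> (forall s, 0 <= s < t0 -> GW s > 0) ->
  forall t, t0 < t -> Phi w (fun s => GW (Rmin s t0)) t < 0.
Proof.
  intros Ht0 HG0 Hpos t Htt.
  set (gamma := fun s => GW (Rmin s t0)).
  assert (gc : forall s, continuous gamma s).
  { intros s. unfold gamma. apply c_comp with (f := fun s => Rmin s t0). apply Rmin_c. apply GW_cont. }
  set (X := exp (- t0)). set (x := exp (- t)).
  assert (HX0 : 0 < X) by apply exp_pos. assert (Hx0 : 0 < x) by apply exp_pos.
  assert (HxX : x < X) by (apply exp_increasing; lra).
  assert (HX1 : X < 1) by (unfold X; rewrite <- exp_0; apply exp_increasing; lra).
  assert (HXe : forall s, s <= t0 -> X * exp s <= 1).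
  { intros s Hs. unfold X. rewrite <- exp_plus, <- exp_0. apply exp_le'. lra. }
  assert (Hze : forall z s, 0 <= z <= X -> 0 <= s <= t0 -> 0 <= z * exp s <= 1).
  { intros z s Hz Hs. split. apply Rmult_le_pos. lra. left; apply exp_pos.
    eapply Rle_trans. 2: apply (HXe s); lra. apply Rmult_le_compat_r. left; apply exp_pos. lra. }
  assert (wzc : forall z s, 0 <= z <= X -> 0 <= s <= t0 -> continuous (fun s => w (z * exp s) * GW s) s).
  { intros z s Hz Hs. apply c_mult. apply c_comp with (f := fun s => z * exp s).
    apply c_mult. apply c_const. apply c_exp. apply w_c. auto. apply GW_cont. }
  assert (w1zc : forall s, 0 <= s <= t0 -> continuous (fun s => Derive w (X * exp s) * exp s * GW s) s).
  { intros s Hs. apply c_mult. apply c_mult. apply c_comp with (f := fun s => X * exp s).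
    apply c_mult. apply c_const. apply c_exp. apply w1_c. apply Hze; lra. apply c_exp. apply GW_cont. }
  set (I := fun z => RInt (fun s => w (z * exp s) * GW s) 0 t0).
  set (J := RInt (fun s => Derive w (X * exp s) * exp s * GW s) 0 t0).
  assert (exI : forall z, 0 <= z <= X -> ex_RInt (fun s => w (z * exp s) * GW s) 0 t0).
  { intros z Hz. apply ex_RInt_on. intros s Hs. rewrite Rmin_left, Rmax_right in Hs by lra. auto. }
  assert (exJ : ex_RInt (fun s => Derive w (X * exp s) * exp s * GW s) 0 t0).
  { apply ex_RInt_on. intros s Hs. rewrite Rmin_left, Rmax_right in Hs by lra. auto. }
  assert (HPhi : Phi w gamma t = x - w x - I x).
  { unfold Phi. fold x.
    assert (ic : forall s, s <= t -> continuous (fun s => w (exp (- t + s)) * gamma s) s).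
    { intros s Hs. apply c_mult. apply wexp_c; auto. auto. }
    rewrite <- (RI_chasles _ 0 t0 t).
    2: { apply ex_RInt_on. intros z Hz. rewrite Rmin_left, Rmax_right in Hz by lra. apply ic; lra. }
    2: { apply ex_RInt_on. intros z Hz. rewrite Rmin_left, Rmax_right in Hz by lra. apply ic; lra. }
    rewrite (RI_ext _ (fun _ => 0) t0 t). rewrite RI_zero.
    rewrite (RI_ext _ (fun s => w (x * exp s) * GW s) 0 t0). unfold I. ring.
    intros s Hs. rewrite Rmin_left, Rmax_right in Hs by lra. unfold gamma.
    rewrite Rmin_left by lra. unfold x. rewrite <- exp_plus. auto.
    intros s Hs. rewrite Rmin_left, Rmax_right in Hs by lra. unfold gamma.
    rewrite Rmin_right by lra. rewrite HG0. ring. }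
  assert (HIX : X - w X - I X = 0).
  { generalize (Phi_GW t0 ltac:(lra)). unfold f0. fold X. intros H.
    rewrite <- H. unfold I. rewrite (RI_ext (fun s => w (X * exp s) * GW s) (fun s => w (exp (- t0 + s)) * GW s)). ring.
    intros s _. unfold X. rewrite <- exp_plus. auto. }
  assert (HI0 : I 0 = 0).
  { unfold I. rewrite (RI_ext _ (fun _ => 0)). apply RI_zero.
    intros s _. rewrite Rmult_0_l, w_0. ring. }
  assert (HJ : 1 - Derive w X - J = 0).
  { generalize (GW_eq t0 ltac:(lra)). rewrite HG0. unfold conv, g0. fold X.
    rewrite (RI_ext _ (fun s => X * (Derive w (X * exp s) * exp s * GW s))).
    rewrite RI_scal by auto. fold J. intros H.
    assert (X * (1 - Derive w X - J) = 0) by lra.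
    apply Rmult_integral in H0. destruct H0; lra.
    intros s Hs. rewrite Rmin_left, Rmax_right in Hs by lra.
    unfold kt. rewrite clamp_id by lra. unfold kk.
    replace (exp (- (t0 - s))) with (X * exp s) by (unfold X; rewrite <- exp_plus; f_equal; ring).
    ring. }
  set (Dfun := fun s => Dl X x (w (0 * exp s)) (w (x * exp s)) (w (X * exp s)) (Derive w (X * exp s) * exp s)).
  assert (HDI : Dl X x (I 0) (I x) (I X) J = RInt (fun s => Dfun s * GW s) 0 t0).
  { rewrite Dl_lin. unfold I, J.
    rewrite <- (RInt_lin4 (fun s => w (0 * exp s) * GW s) (fun s => w (x * exp s) * GW s)
      (fun s => w (X * exp s) * GW s) (fun s => Derive w (X * exp s) * exp s * GW s) 0 t0
      (cA X x) (cB X x) (cC X x) (cD X x)).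
    2-4: apply exI; lra. 2: auto.
    apply RI_ext. intros s _. unfold Dfun. rewrite Dl_lin. ring. }
  assert (HDI0 : 0 <= Dl X x (I 0) (I x) (I X) J).
  { rewrite HDI. apply RInt_ge_0. lra.
    apply ex_RInt_on. intros s Hs. rewrite Rmin_left, Rmax_right in Hs by lra.
    apply c_mult; [|apply GW_cont].
    apply (continuous_ext (fun s => cA X x * w (0*exp s) + cB X x * w (x*exp s) + cC X x * w (X * exp s)
       + cD X x * (Derive w (X*exp s) * exp s))).
    intros; unfold Dfun; rewrite Dl_lin; reflexivity.
    assert (wc' : forall z, 0 <= z <= X -> continuous (fun s => w (z * exp s)) s).
    { intros z Hz. apply c_comp with (f := fun s => z * exp s).
      apply c_mult. apply c_const. apply c_exp. apply w_c. apply Hze; lra. }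
    repeat apply c_plus; apply c_mult; try apply c_const; try (apply wc'; lra).
    apply c_mult. apply c_comp with (f := fun s => X * exp s).
    apply c_mult. apply c_const. apply c_exp. apply w1_c. apply Hze; lra. apply c_exp.
    intros s Hs. apply Rmult_le_pos. 2: left; apply Hpos; lra.
    left. unfold Dfun.
    apply (D_pos (fun z => w (z * exp s)) (fun z => Derive w (z * exp s) * exp s)
                 (fun z => Derive (Derive w) (z * exp s) * exp s * exp s)).
    lra. intros z Hz. apply phi_der. apply Hze; lra.
    intros z Hz. apply phi1_der. apply Hze; lra.
    intros u v Hu Huv Hv. rewrite !Rmult_assoc. apply Rmult_lt_compat_r.
    apply Rmult_lt_0_compat; apply exp_pos.
    apply w2_inc. apply Rmult_le_pos; [lra| left; apply exp_pos].
    apply Rmult_lt_compat_r. apply exp_pos. auto. apply Hze; lra. }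
  assert (HDw : 0 < Dl X x (w 0) (w x) (w X) (Derive w X)).
  { apply (D_pos w (Derive w) (Derive (Derive w))). lra.
    intros z Hz; apply w_der; lra. intros z Hz; apply w1_der; lra.
    intros u v Hu Huv Hv; apply w2_inc; lra. }
  assert (HDH : Dl X x (0 - w 0 - I 0) (x - w x - I x) (X - w X - I X) (1 - Derive w X - J)
     = Dl X x 0 x X 1 - Dl X x (w 0) (w x) (w X) (Derive w X) - Dl X x (I 0) (I x) (I X) J).
  { rewrite !D_lin. reflexivity. }
  rewrite HI0, HIX, HJ, w_0, D_idz in HDH by lra.
  replace (0 - 0 - 0) with 0 in HDH by ring.
  rewrite D_H in HDH by lra.
  assert (Hb : 0 < (1/((X-x)*(X-x)) + 1/((X-x)*X) + 1/(x*X)) / X).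
  { apply Rdiv_lt_0_compat; auto.
    assert (0 < 1/((X-x)*(X-x))) by (apply Rdiv_lt_0_compat; [lra| apply Rmult_lt_0_compat; lra]).
    assert (0 < 1/((X-x)*X)) by (apply Rdiv_lt_0_compat; [lra| apply Rmult_lt_0_compat; lra]).
    assert (0 < 1/(x*X)) by (apply Rdiv_lt_0_compat; [lra| apply Rmult_lt_0_compat; lra]).
    lra. }
  rewrite HPhi. rewrite w_0 in HDw. rewrite HI0 in HDI0.
  assert (((1/((X-x)*(X-x)) + 1/((X-x)*X) + 1/(x*X)) / X) * (x - w x - I x) < 0) by lra.
  destruct (Rlt_le_dec (x - w x - I x) 0); auto.
  assert (0 <= ((1/((X-x)*(X-x)) + 1/((X-x)*X) + 1/(x*X)) / X) * (x - w x - I x)) by (apply Rmult_le_pos; lra).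
  lra.
Qed.
Lemma main_T : exists (gamma : R -> R) (t0 : R),
    0 < t0 /\
    (forall t, 0 <= t -> ex_RInt (fun s => w (exp (- t + s)) * gamma s) 0 t) /\
    (forall t, 0 <= t < t0 -> gamma t > 0) /\
    (forall t, t0 <= t -> gamma t = 0) /\
    (forall t, 0 <= t <= t0 -> Phi w gamma t = 0) /\
    (forall t, t0 < t -> Phi w gamma t < 0).
Proof.
  destruct first_zero as [t0 [Ht0 [HG0 Hpos]]].
  exists (fun s => GW (Rmin s t0)), t0. split; [|split; [|split; [|split; [|split]]]].
  - lra.
  - intros t Ht. apply ex_RInt_on. intros z Hz; rewrite Rmin_left, Rmax_right in Hz by lra.
    apply c_mult. apply wexp_c; lra.
    apply c_comp with (f := fun s => Rmin s t0). apply Rmin_c. apply GW_cont.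
  - intros t Ht. cbv beta. rewrite Rmin_left by lra. apply Hpos; lra.
  - intros t Ht. cbv beta. rewrite Rmin_right by lra. auto.
  - intros t Ht. unfold Phi. rewrite (RI_ext _ (fun s => w (exp (- t + s)) * GW s)).
    rewrite Phi_GW by lra. unfold f0. ring.
    intros s Hs. rewrite Rmin_left, Rmax_right in Hs by lra. rewrite Rmin_left by lra. auto.
  - apply tail; auto.
Qed.
End W.

Theorem lemma8 (w : R -> R) (hw : wminus_hyp w) :
  exists (gamma : R -> R) (t0 : R),
    0 < t0 /\
    (forall t, 0 <= t -> ex_RInt (fun s => w (exp (- t + s)) * gamma s) 0 t) /\
    (forall t, 0 <= t < t0 -> gamma t > 0) /\
    (forall t, t0 <= t -> gamma t = 0) /\
    (forall t, 0 <= t <= t0 -> Phi w gamma t = 0) /\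
    (forall t, t0 < t -> Phi w gamma t < 0).
Proof.
  destruct (exists_T w hw) as [T [HT HfT]].
  eapply main_T; eauto.
Qed.
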